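(* Let $(\mathcal{T},[1],\Delta)$ be a triangulated category and $\mathcal{N}$ a triangulated subcategory of $\mathcal{T}$. Let $\mathcal{U},\mathcal{V}$ be additive subcategories of $\mathcal{T}$ such that $(\mathcal{U},\mathcal{U}^{\perp})$ and $({}^{\perp}\mathcal{V},\mathcal{V})$ are torsion pairs in $\mathcal{T}$. Assume that $\mathcal{X}=\mathcal{U}\cap\mathcal{V}\cap\mathcal{N}$ is closed under direct summands, $\mathcal{U}^{\perp}[-1]\subseteq\mathcal{V}\cap\mathcal{N}$ and ${}^{\perp}\mathcal{V}[1]\subseteq\mathcal{U}\cap\mathcal{N}$. Then: (i) $(\mathcal{U},\mathcal{X},\mathcal{V})$ is an $\mathcal{N}$-localization triple; (ii) if ${}^{\perp}\mathcal{V}[1]=\mathcal{U}\cap\mathcal{N}$, then $(\mathcal{U},\mathcal{X},\mathcal{V})$ satisfies the Verdier condition; (iii) if $\mathcal{U}^{\perp}[-1]=\mathcal{V}\cap\mathcal{N}$, then $(\mathcal{U},\mathcal{X},\mathcal{V})$ satisfies the Verdier condition.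
   Context: $\Delta$ denotes the class of distinguished triangles of $\mathcal{T}$; all subcategories are full, additive and closed under isomorphisms. $\mathcal{U}^{\perp}=\{T\in\mathcal{T}:\mathrm{Hom}_{\mathcal{T}}(\mathcal{U},T)=0\}$, ${}^{\perp}\mathcal{V}=\{T:\mathrm{Hom}_{\mathcal{T}}(T,\mathcal{V})=0\}$. A pair $(\mathcal{C},\mathcal{D})$ of additive subcategories is a torsion pair if $\mathrm{Hom}_{\mathcal{T}}(\mathcal{C},\mathcal{D})=0$ and every $T\in\mathcal{T}$ admits a triangle $C\to T\to D\to C[1]$ in $\Delta$ with $C\in\mathcal{C}$, $D\in\mathcal{D}$. For additive subcategories $\mathcal{X}\subseteq\mathcal{C}$, the factor category $\mathcal{C}/[\mathcal{X}]$ has the objects of $\mathcal{C}$ and morphisms $\mathrm{Hom}_{\mathcal{T}}(A,B)$ modulo those factoring through an object of $\mathcal{X}$; $\underline{f}$ is the class of $f$. For a subcategory $\mathcal{Y}$, a morphism $f\colon A\to B$ is $\mathcal{Y}$-monic if $\mathrm{Hom}_{\mathcal{T}}(B,Y)\to\mathrm{Hom}_{\mathcal{T}}(A,Y)$ is surjective for all $Y\in\mathcal{Y}$, $\mathcal{Y}$-epic dually; a $\mathcal{Y}$-preenvelope of $A$ is a $\mathcal{Y}$-monic $A\to Y$ with $Y\in\mathcal{Y}$, a $\mathcal{Y}$-precover is a $\mathcal{Y}$-epic $Y\to A$ with $Y\in\mathcal{Y}$. For additive subcategories $\mathcal{U},\mathcal{V}\supseteq\mathcal{X}$ of an additive subcategory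 $\mathcal{A}$, put $\mathcal{U}^{\perp_{\mathcal{A}/[\mathcal{X}]}}=\{W\in\mathcal{A}:\mathrm{Hom}_{\mathcal{A}/[\mathcal{X}]}(\mathcal{U},W)=0\}$ and ${}^{\perp_{\mathcal{A}/[\mathcal{X}]}}\mathcal{V}=\{W\in\mathcal{A}:\mathrm{Hom}_{\mathcal{A}/[\mathcal{X}]}(W,\mathcal{V})=0\}$. A triple $(\mathcal{U},\mathcal{X},\mathcal{V})$ with $\mathcal{X}\subseteq\mathcal{U}\cap\mathcal{V}$ and $\mathcal{U},\mathcal{V}\subseteq\mathcal{A}$ is a localization triple of $\mathcal{A}$ if: (a) each $A\in\mathcal{A}$ admits a triangle $A[-1]\to W_A\to Q(A)\xrightarrow{r_A}A$ in $\Delta$ with $r_A$ a $\mathcal{U}$-precover and $W_A\in\mathcal{U}^{\perp_{\mathcal{A}/[\mathcal{X}]}}$; (b) each $A\in\mathcal{A}$ admits a triangle $A\xrightarrow{j^A}R(A)\to W^A\to A[1]$ in $\Delta$ with $j^A$ a $\mathcal{V}$-preenvelope and $W^A\in{}^{\perp_{\mathcal{A}/[\mathcal{X}]}}\mathcal{V}$; (c) if $A\in\mathcal{V}$ then $Q(A)\in\mathcal{U}\cap\mathcal{V}$ and $W_A\in(\mathcal{U}\cap\mathcal{V})^{\perp_{\mathcal{V}/[\mathcal{X}]}}$, and if $A\in\mathcal{U}$ then $R(A)\in\mathcal{U}\cap\mathcal{V}$ and $W^A\in{}^{\perp_{\mathcal{U}/[\mathcal{X}]}}(\mathcal{U}\cap\mathcal{V})$.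 A localization triple $(\mathcal{U},\mathcal{X},\mathcal{V})$ of $\mathcal{T}$ is an $\mathcal{N}$-localization triple if $\mathcal{X}=\mathcal{U}\cap\mathcal{V}\cap\mathcal{N}$ and $\mathcal{U}^{\perp_{\mathcal{T}/[\mathcal{X}]}}\subseteq\mathcal{N}$, ${}^{\perp_{\mathcal{T}/[\mathcal{X}]}}\mathcal{V}\subseteq\mathcal{N}$. It satisfies the Verdier condition if for every triangle $A\xrightarrow{s}B\to N\to A[1]$ in $\Delta$ with $A,B\in\mathcal{U}\cap\mathcal{V}$ and $N\in\mathcal{N}$, $\underline{s}$ is an isomorphism in $(\mathcal{U}\cap\mathcal{V})/[\mathcal{X}]$. *)

(* Defs.v *)
From HB Require Import structures.
From mathcomp Require Import all_boot all_algebra.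
Set Implicit Arguments.
Unset Strict Implicit.
Unset Printing Implicit Defensive.
Import GRing.Theory.
Local Open Scope ring_scope.

Record CatData := {
  Obj : Type;
  Hom : Obj -> Obj -> zmodType;
  comp : forall A B C : Obj, Hom B C -> Hom A B -> Hom A C;
  idm : forall A : Obj, Hom A A;
  (* a chosen zero object and chosen biproducts *)
  zobj : Obj;
  bp : Obj -> Obj -> Obj;
  bi1 : forall A B, Hom A (bp A B);
  bi2 : forall A B, Hom B (bp A B);
  bp1 : forall A B, Hom (bp A B) A;
  bp2 : forall A B, Hom (bp A B) B;
  (* the shift functor [1] and a quasi-inverse [-1] *)
  sh : Obj -> Obj;
  shm : forall A B, Hom A B -> Hom (sh A) (sh B);
  ush : Obj -> Obj;
  ushm : forall A B, Hom A B -> Hom (ush A) (ush B);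
  eta : forall A, Hom A (ush (sh A));
  eps : forall A, Hom (sh (ush A)) A
}.

Arguments comp {c A B C}.
Arguments idm {c}.
Arguments zobj {c}.
Arguments bp {c}.
Arguments bi1 {c A B}.
Arguments bi2 {c A B}.
Arguments bp1 {c A B}.
Arguments bp2 {c A B}.
Arguments sh {c}.
Arguments shm {c A B}.
Arguments ush {c}.
Arguments ushm {c A B}.
Arguments eta {c}.
Arguments eps {c}.

Notation "g \oc f" := (comp g f) (at level 40, left associativity).

Definition is_iso (D : CatData) (A B : Obj D) (f : Hom A B) : Prop :=
  exists g : Hom B A, g \oc f = idm A /\ f \oc g = idm B.

Definition isomorphic (D : CatData) (A B : Obj D) : Prop :=
  exists f : Hom A B, is_iso f.

Definition additive_cat (D : CatData) : Prop :=
  [/\ (forall (A B C E : Obj D) (h : Hom C E) (g : Hom B C) (f : Hom A B),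
         h \oc (g \oc f) = (h \oc g) \oc f),
      (forall (A B : Obj D) (f : Hom A B), idm B \oc f = f /\ f \oc idm A = f),
      (forall (A B C : Obj D) (g g' : Hom B C) (f : Hom A B),
         (g + g') \oc f = g \oc f + g' \oc f),
      (forall (A B C : Obj D) (g : Hom B C) (f f' : Hom A B),
         g \oc (f + f') = g \oc f + g \oc f') &
      (((forall (A : Obj D) (f g : Hom zobj A), f = g) /\
        (forall (A : Obj D) (f g : Hom A zobj), f = g)) /\
      (forall A B : Obj D,
         [/\ @bp1 D A B \oc @bi1 D A B = idm A, @bp2 D A B \oc @bi2 D A B = idm B,
             @bp1 D A B \oc @bi2 D A B = 0,
             @bp2 D A B \oc @bi1 D A B = 0 &
             @bi1 D A B \oc @bp1 D A B + @bi2 D A B \oc @bp2 D A B = idm (bp A B)]))].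

Definition shift_autoequiv (D : CatData) : Prop :=
  [/\ ((forall A : Obj D, shm (idm A) = idm (sh A)) /\
       (forall (A B C : Obj D) (g : Hom B C) (f : Hom A B),
          shm (g \oc f) = shm g \oc shm f) /\
       (forall (A B : Obj D) (f g : Hom A B), shm (f + g) = shm f + shm g)),
      ((forall A : Obj D, ushm (idm A) = idm (ush A)) /\
       (forall (A B C : Obj D) (g : Hom B C) (f : Hom A B),
          ushm (g \oc f) = ushm g \oc ushm f) /\
       (forall (A B : Obj D) (f g : Hom A B), ushm (f + g) = ushm f + ushm g)),
      ((forall A : Obj D, is_iso (eta A)) /\
       (forall (A B : Obj D) (f : Hom A B),
          ushm (shm f) \oc eta A = eta B \oc f)) &
      ((forall A : Obj D, is_iso (eps A)) /\
       (forall (A B : Obj D) (f : Hom A B),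
          f \oc eps A = eps B \oc shm (ushm f)))].

Record triangle (D : CatData) := Tri {
  tA : Obj D; tB : Obj D; tC : Obj D;
  tf : Hom tA tB; tg : Hom tB tC; th : Hom tC (sh tA) }.
Arguments Tri {D tA tB tC}.

Definition tri_mor (D : CatData) (T T' : triangle D)
  (a : Hom (tA T) (tA T')) (b : Hom (tB T) (tB T')) (c : Hom (tC T) (tC T')) :=
  [/\ b \oc tf T = tf T' \oc a, c \oc tg T = tg T' \oc b &
      shm a \oc th T = th T' \oc c].

Arguments tri_mor {D} T T' a b c.

Definition tri_iso (D : CatData) (T T' : triangle D) : Prop :=
  exists a b c, [/\ tri_mor T T' a b c, is_iso a, is_iso b & is_iso c].

Definition TR1 (D : CatData) (dist : triangle D -> Prop) : Prop :=
  [/\ (forall T T', tri_iso T T' -> dist T -> dist T'),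
      (forall A : Obj D,
         dist (Tri (idm A) (0 : Hom A zobj) (0 : Hom zobj (sh A)))) &
      (forall (A B : Obj D) (f : Hom A B),
         exists C (g : Hom B C) (h : Hom C (sh A)), dist (Tri f g h))].

Definition TR2 (D : CatData) (dist : triangle D -> Prop) : Prop :=
  forall (A B C : Obj D) (f : Hom A B) (g : Hom B C) (h : Hom C (sh A)),
    dist (Tri f g h) <-> dist (Tri g h (- shm f)).

Definition TR3 (D : CatData) (dist : triangle D -> Prop) : Prop :=
  forall (T T' : triangle D) (a : Hom (tA T) (tA T')) (b : Hom (tB T) (tB T')),
    dist T -> dist T' -> b \oc tf T = tf T' \oc a ->
    exists c : Hom (tC T) (tC T'),
      c \oc tg T = tg T' \oc b /\ shm a \oc th T = th T' \oc c.

Definition TR4 (D : CatData) (dist : triangle D -> Prop) : Prop :=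
  forall (A B C C' A' B' : Obj D) (f : Hom A B) (g : Hom B C)
    (f' : Hom B C') (f'' : Hom C' (sh A))
    (g' : Hom C A') (g'' : Hom A' (sh B))
    (h' : Hom C B') (h'' : Hom B' (sh A)),
    dist (Tri f f' f'') -> dist (Tri g g' g'') -> dist (Tri (g \oc f) h' h'') ->
    exists (u : Hom C' B') (v : Hom B' A'),
      [/\ dist (Tri u v (shm f' \oc g'')),
          u \oc f' = h' \oc g, h'' \oc u = f'',
          v \oc h' = g' & g'' \oc v = shm f \oc h''].

Record TriCat := {
  tdata :> CatData;
  dist : triangle tdata -> Prop;
  tc_additive : additive_cat tdata;
  tc_shift : shift_autoequiv tdata;
  tc_TR1 : TR1 dist;
  tc_TR2 : TR2 dist;
  tc_TR3 : TR3 dist;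
  tc_TR4 : TR4 dist }.

(* Subcategories (full, given by a predicate on objects).              *)
Section Sub.
Context {T : TriCat}.
Implicit Types P Q S U V X N Amb : Obj T -> Prop.

Definition capP P Q : Obj T -> Prop := fun A => P A /\ Q A.
Definition allP : Obj T -> Prop := fun _ => True.
Definition subP P Q : Prop := forall A, P A -> Q A.
Definition eqP' P Q : Prop := forall A, P A <-> Q A.

Definition iso_closed P : Prop :=
  forall A B : Obj T, isomorphic A B -> P A -> P B.

Definition additive_subcat P : Prop :=
  [/\ iso_closed P, P zobj & forall A B, P A -> P B -> P (bp A B)].

Definition summand_closed P : Prop :=
  forall A B : Obj T, P (bp A B) -> P A /\ P B.

Definition triangulated_subcat N : Prop :=
  [/\ additive_subcat N, (forall A, N A -> N (sh A)),
      (forall A, N A -> N (ush A)) &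
      (forall t : triangle T, dist t -> N (tA t) -> N (tB t) -> N (tC t))].

(* P[1] and P[-1] (closed under isomorphisms) *)
Definition shift_up P : Obj T -> Prop :=
  fun Y : Obj T => exists A, P A /\ isomorphic Y (sh A).
Definition shift_down P : Obj T -> Prop :=
  fun Y : Obj T => exists A, P A /\ isomorphic Y (ush A).

Definition rperp P : Obj T -> Prop :=
  fun Y : Obj T => forall A, P A -> forall f : Hom A Y, f = 0.
Definition lperp P : Obj T -> Prop :=
  fun Y : Obj T => forall A, P A -> forall f : Hom Y A, f = 0.

Definition torsion_pair P Q : Prop :=
  [/\ additive_subcat P, additive_subcat Q,
      (forall A B, P A -> Q B -> forall f : Hom A B, f = 0) &
      (forall Y : Obj T, exists (A B : Obj T) (f : Hom A Y) (g : Hom Y B)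
         (h : Hom B (sh A)), [/\ dist (Tri f g h), P A & Q B])].

(* f is zero in the factor category modulo [X] *)
Definition factors_through X (A B : Obj T) (f : Hom A B) : Prop :=
  exists Y, X Y /\ exists (g : Hom A Y) (h : Hom Y B), f = h \oc g.

Definition qrperp Amb X S : Obj T -> Prop :=
  fun W => Amb W /\ forall A, S A -> forall f : Hom A W, factors_through X f.
Definition qlperp Amb X S : Obj T -> Prop :=
  fun W => Amb W /\ forall A, S A -> forall f : Hom W A, factors_through X f.

Definition Ymonic Y (A B : Obj T) (f : Hom A B) : Prop :=
  forall Z, Y Z -> forall g : Hom A Z, exists g' : Hom B Z, g' \oc f = g.
Definition Yepic Y (A B : Obj T) (f : Hom A B) : Prop :=
  forall Z, Y Z -> forall g : Hom Z B, exists g' : Hom Z A, f \oc g' = g.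
Definition preenvelope Y (A B : Obj T) (f : Hom A B) : Prop := Y B /\ Ymonic Y f.
Definition precover Y (A B : Obj T) (f : Hom A B) : Prop := Y A /\ Yepic Y f.

(* localization triple (U, X, V) of the additive subcategory Amb.
   The triangles of (a), (b) are those constrained by (c). *)
Definition loc_triple Amb U X V : Prop :=
  [/\ [/\ additive_subcat Amb, additive_subcat U, additive_subcat V &
          additive_subcat X],
      subP X (capP U V), (subP U Amb /\ subP V Amb),
      (* (a) and first half of (c) *)
      (forall A, Amb A ->
         exists (W Q : Obj T) (a : Hom (ush A) W) (b : Hom W Q)
                (c : Hom Q (sh (ush A))),
           [/\ dist (Tri a b c), precover U (eps A \oc c), qrperp Amb X U W &
               (V A -> capP U V Q /\ qrperp V X (capP U V) W)]) &
      (* (b) and second half of (c) *)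
      (forall A, Amb A ->
         exists (R W : Obj T) (j : Hom A R) (b : Hom R W) (c : Hom W (sh A)),
           [/\ dist (Tri j b c), preenvelope V j, qlperp Amb X V W &
               (U A -> capP U V R /\ qlperp U X (capP U V) W)])].

Definition N_loc_triple N U X V : Prop :=
  [/\ loc_triple allP U X V, eqP' X (capP (capP U V) N),
      subP (qrperp allP X U) N & subP (qlperp allP X V) N].

(* the class of s is an isomorphism in (U cap V)/[X] *)
Definition quot_iso X (A B : Obj T) (s : Hom A B) : Prop :=
  exists t : Hom B A,
    factors_through X (t \oc s - idm A) /\ factors_through X (s \oc t - idm B).

Definition verdier_cond N U X V : Prop :=
  forall (A B M : Obj T) (s : Hom A B) (g : Hom B M) (h : Hom M (sh A)),
    dist (Tri s g h) -> capP U V A -> capP U V B -> N M -> quot_iso X s.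

End Sub.

(* Main.v *)
Require Import Defs.
From HB Require Import structures.
From mathcomp Require Import all_boot all_algebra.
From Stdlib Require Import Classical.
Set Implicit Arguments. Unset Strict Implicit. Unset Printing Implicit Defensive.
Import GRing.Theory.
Local Open Scope ring_scope.
Local Notation Hom := Defs.Hom.
Local Notation eta := Defs.eta.
Local Notation eps := Defs.eps.
Local Notation allP := Defs.allP.

Section Basics.
Variable T : TriCat.
Implicit Types A B C Z : Obj T.

Lemma cA A B C E (h : Hom C E) (g : Hom B C) (f : Hom A B) :
  h \oc (g \oc f) = (h \oc g) \oc f.
Proof. by case: (tc_additive T) => H _ _ _ _; apply: H. Qed.
Lemma c1l A B (f : Hom A B) : idm B \oc f = f.
Proof. by case: (tc_additive T) => _ H _ _ _; case: (H _ _ f). Qed.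
Lemma c1r A B (f : Hom A B) : f \oc idm A = f.
Proof. by case: (tc_additive T) => _ H _ _ _; case: (H _ _ f). Qed.
Lemma cDl A B C (g g' : Hom B C) (f : Hom A B) : (g + g') \oc f = g \oc f + g' \oc f.
Proof. by case: (tc_additive T) => _ _ H _ _; apply: H. Qed.
Lemma cDr A B C (g : Hom B C) (f f' : Hom A B) : g \oc (f + f') = g \oc f + g \oc f'.
Proof. by case: (tc_additive T) => _ _ _ H _; apply: H. Qed.
Lemma c0l A B C (f : Hom A B) : (0 : Hom B C) \oc f = 0.
Proof. by apply: (addrI ((0 : Hom B C) \oc f)); rewrite -cDl !addr0. Qed.
Lemma c0r A B C (g : Hom B C) : g \oc (0 : Hom A B) = 0.
Proof. by apply: (addrI (g \oc (0 : Hom A B))); rewrite -cDr !addr0. Qed.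
Lemma cNl A B C (g : Hom B C) (f : Hom A B) : (- g) \oc f = - (g \oc f).
Proof. by apply: (addrI (g \oc f)); rewrite -cDl !subrr c0l. Qed.
Lemma cNr A B C (g : Hom B C) (f : Hom A B) : g \oc (- f) = - (g \oc f).
Proof. by apply: (addrI (g \oc f)); rewrite -cDr !subrr c0r. Qed.
Lemma cBl A B C (g g' : Hom B C) (f : Hom A B) : (g - g') \oc f = g \oc f - g' \oc f.
Proof. by rewrite cDl cNl. Qed.
Lemma cBr A B C (g : Hom B C) (f f' : Hom A B) : g \oc (f - f') = g \oc f - g \oc f'.
Proof. by rewrite cDr cNr. Qed.

Lemma zobj_l A (f g : Hom (zobj : Obj T) A) : f = g.
Proof. by case: (tc_additive T) => _ _ _ _ [[H _] _]; apply: H. Qed.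
Lemma zobj_r A (f g : Hom A (zobj : Obj T)) : f = g.
Proof. by case: (tc_additive T) => _ _ _ _ [[_ H] _]; apply: H. Qed.
Lemma bpE A B :
  [/\ @bp1 T A B \oc @bi1 T A B = idm A, @bp2 T A B \oc @bi2 T A B = idm B,
      @bp1 T A B \oc @bi2 T A B = 0,
      @bp2 T A B \oc @bi1 T A B = 0 &
      @bi1 T A B \oc @bp1 T A B + @bi2 T A B \oc @bp2 T A B = idm (bp A B)].
Proof. by case: (tc_additive T) => _ _ _ _ [_ H]; apply: H. Qed.

Lemma sh1 A : shm (idm A) = idm (sh A).
Proof. by case: (tc_shift T) => [[H _] _ _ _]. Qed.
Lemma shM A B C (g : Hom B C) (f : Hom A B) : shm (g \oc f) = shm g \oc shm f.
Proof. by case: (tc_shift T) => [[_ [H _]] _ _ _]. Qed.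
Lemma shD A B (f g : Hom A B) : shm (f + g) = shm f + shm g.
Proof. by case: (tc_shift T) => [[_ [_ H]] _ _ _]. Qed.
Lemma sh0 A B : shm (0 : Hom A B) = 0.
Proof. by apply: (addrI (shm (0 : Hom A B))); rewrite -shD !addr0. Qed.
Lemma shN A B (f : Hom A B) : shm (- f) = - shm f.
Proof. by apply: (addrI (shm f)); rewrite -shD !subrr sh0. Qed.
Lemma ush1 A : ushm (idm A) = idm (ush A).
Proof. by case: (tc_shift T) => [_ [H _] _ _]. Qed.
Lemma ushM A B C (g : Hom B C) (f : Hom A B) : ushm (g \oc f) = ushm g \oc ushm f.
Proof. by case: (tc_shift T) => [_ [_ [H _]] _ _]. Qed.
Lemma ushD A B (f g : Hom A B) : ushm (f + g) = ushm f + ushm g.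
Proof. by case: (tc_shift T) => [_ [_ [_ H]] _ _]. Qed.
Lemma ush0 A B : ushm (0 : Hom A B) = 0.
Proof. by apply: (addrI (ushm (0 : Hom A B))); rewrite -ushD !addr0. Qed.
Lemma eta_iso A : is_iso (eta A : Hom A (ush (sh A))).
Proof. by case: (tc_shift T) => [_ _ [H _] _]. Qed.
Lemma eta_nat A B (f : Hom A B) : ushm (shm f) \oc eta A = eta B \oc f.
Proof. by case: (tc_shift T) => [_ _ [_ H] _]. Qed.
Lemma eps_iso A : is_iso (eps A : Hom (sh (ush A)) A).
Proof. by case: (tc_shift T) => [_ _ _ [H _]]. Qed.
Lemma eps_nat A B (f : Hom A B) : f \oc eps A = eps B \oc shm (ushm f).
Proof. by case: (tc_shift T) => [_ _ _ [_ H]]. Qed.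

Lemma iso_lcancel A B Z (f : Hom A B) (u v : Hom Z A) : is_iso f -> f \oc u = f \oc v -> u = v.
Proof.
case=> g [gf _] e.
by rewrite -(c1l u) -(c1l v) -gf -!cA e.
Qed.
Lemma iso_rcancel A B Z (f : Hom A B) (u v : Hom B Z) : is_iso f -> u \oc f = v \oc f -> u = v.
Proof.
case=> g [_ fg] e.
by rewrite -(c1r u) -(c1r v) -fg !cA e.
Qed.

Lemma sh_faith A B (u v : Hom A B) : shm u = shm v -> u = v.
Proof.
move=> e; apply: (iso_lcancel (eta_iso B)).
by rewrite -!eta_nat e.
Qed.
Lemma ush_faith A B (u v : Hom A B) : ushm u = ushm v -> u = v.
Proof.
move=> e; apply: (iso_rcancel (eps_iso A)).
by rewrite !eps_nat e.
Qed.
Lemma sh_full A B (c : Hom (sh A) (sh B)) : exists x : Hom A B, shm x = c.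
Proof.
case: (eta_iso B) => ei [ei1 ei2].
exists (ei \oc (ushm c \oc eta A)).
apply: ush_faith; apply: (iso_rcancel (eta_iso A)).
by rewrite eta_nat !cA ei2 c1l.
Qed.

Lemma iso_id A : is_iso (idm A).
Proof. by exists (idm A); rewrite c1l. Qed.
Lemma iso_inv A B (f : Hom A B) (g : Hom B A) :
  g \oc f = idm A -> f \oc g = idm B -> is_iso g.
Proof. by move=> e1 e2; exists f. Qed.
Lemma iso_comp A B C (g : Hom B C) (f : Hom A B) : is_iso f -> is_iso g -> is_iso (g \oc f).
Proof.
case=> f' [f1 f2] [g' [g1 g2]]; exists (f' \oc g'); split.
  by rewrite -cA (cA g') g1 c1l f1.
by rewrite -cA (cA f) f2 c1l g2.
Qed.
Lemma iso_opp A B (f : Hom A B) : is_iso f -> is_iso (- f).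
Proof.
case=> g [g1 g2]; exists (- g); split; by rewrite cNl cNr opprK.
Qed.
Lemma isoR A : isomorphic A A.
Proof. by exists (idm A); apply: iso_id. Qed.
Lemma isoS A B : isomorphic A B -> isomorphic B A.
Proof. by case=> f [g [g1 g2]]; exists g; exists f. Qed.
Lemma isoT A B C : isomorphic A B -> isomorphic B C -> isomorphic A C.
Proof. by case=> f fi [g gi]; exists (g \oc f); apply: iso_comp. Qed.
Lemma iso_sh A B : isomorphic A B -> isomorphic (sh A) (sh B).
Proof.
case=> f [g [g1 g2]]; exists (shm f); exists (shm g).
by rewrite -!shM g1 g2 !sh1.
Qed.
Lemma iso_ush A B : isomorphic A B -> isomorphic (ush A) (ush B).
Proof.
case=> f [g [g1 g2]]; exists (ushm f); exists (ushm g).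
by rewrite -!ushM g1 g2 !ush1.
Qed.
Lemma iso_eps A : isomorphic (sh (ush A)) A.
Proof. by exists (eps A); apply: eps_iso. Qed.
Lemma iso_eta A : isomorphic A (ush (sh A)).
Proof. by exists (eta A); apply: eta_iso. Qed.


Lemma rot A B C (f : Hom A B) (g : Hom B C) (h : Hom C (sh A)) :
  dist (Tri f g h) -> dist (Tri g h (- shm f)).
Proof. exact: (proj1 (@tc_TR2 T _ _ _ f g h)). Qed.
Lemma rotb A B C (f : Hom A B) (g : Hom B C) (h : Hom C (sh A)) :
  dist (Tri g h (- shm f)) -> dist (Tri f g h).
Proof. exact: (proj2 (@tc_TR2 T _ _ _ f g h)). Qed.
Lemma rot2 A B C (f : Hom A B) (g : Hom B C) (h : Hom C (sh A)) :
  dist (Tri f g h) -> dist (Tri h (- shm f) (- shm g)).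
Proof. by move=> /rot /rot. Qed.
Lemma tri_id A : dist (Tri (idm A) (0 : Hom A zobj) (0 : Hom zobj (sh A))).
Proof. by case: (@tc_TR1 T). Qed.
Lemma tri_ex A B (f : Hom A B) : exists C (g : Hom B C) (h : Hom C (sh A)), dist (Tri f g h).
Proof. by case: (@tc_TR1 T) => _ _ H; apply: H. Qed.
Lemma dist_iso A B C A' B' C' (f : Hom A B) (g : Hom B C) (h : Hom C (sh A))
  (f' : Hom A' B') (g' : Hom B' C') (h' : Hom C' (sh A'))
  (a : Hom A A') (b : Hom B B') (c : Hom C C') :
  b \oc f = f' \oc a -> c \oc g = g' \oc b -> shm a \oc h = h' \oc c ->
  is_iso a -> is_iso b -> is_iso c ->
  dist (Tri f g h) -> dist (Tri f' g' h').
Proof.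
move=> e1 e2 e3 ia ib ic d; case: (@tc_TR1 T) => H _ _; apply: (H (Tri f g h)) => //.
by exists a, b, c; split.
Qed.

Lemma TR3' A B C A' B' C' (f : Hom A B) (g : Hom B C) (h : Hom C (sh A))
  (f' : Hom A' B') (g' : Hom B' C') (h' : Hom C' (sh A'))
  (a : Hom A A') (b : Hom B B') :
  dist (Tri f g h) -> dist (Tri f' g' h') -> b \oc f = f' \oc a ->
  exists c : Hom C C', c \oc g = g' \oc b /\ shm a \oc h = h' \oc c.
Proof. exact: (@tc_TR3 T (Tri f g h) (Tri f' g' h') a b). Qed.

Lemma tri_z Z : dist (Tri (0 : Hom zobj Z) (idm Z) (0 : Hom Z (sh zobj))).
Proof.
have := rot2 (tri_id (ush Z)).
apply: (dist_iso (a := idm zobj) (b := eps Z) (c := - eps Z)).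
- by rewrite c0r c0l.
- by rewrite cNl cNr sh1 c1r c1l opprK.
- by rewrite sh0 oppr0 !c0r c0l.
- exact: iso_id.
- exact: eps_iso.
- by apply: iso_opp; apply: eps_iso.
Qed.

Lemma CZ A B C (f : Hom A B) (g : Hom B C) (h : Hom C (sh A)) :
  dist (Tri f g h) -> g \oc f = 0.
Proof.
move=> d.
have [c [e1 _]] := TR3' (tri_id A) d (a := idm A) (b := f) erefl.
by move: e1; rewrite /= c0r => <-.
Qed.

Lemma E1 A B C (f : Hom A B) (g : Hom B C) (h : Hom C (sh A)) :
  dist (Tri f g h) -> forall Z (y : Hom Z B), g \oc y = 0 -> exists x, y = f \oc x.
Proof.
move=> d Z y gy.
have [c [_ e2]] := TR3' (rot (tri_id Z)) (rot d) (a := y) (b := 0) (etrans (c0l _ _) (esym gy)).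
move: e2 => /=; rewrite sh1 cNr cNl c1r => /oppr_inj.
have [x <-] := sh_full c.
by rewrite -shM => /sh_faith ->; exists x.
Qed.

Lemma E2 A B C (f : Hom A B) (g : Hom B C) (h : Hom C (sh A)) :
  dist (Tri f g h) -> forall Z (y : Hom B Z), y \oc f = 0 -> exists z, y = z \oc g.
Proof.
move=> d Z y yf.
have [c [e1 _]] := TR3' d (tri_z Z) (a := 0) (b := y) (etrans yf (esym (c0l _ _))).
by exists c; move: e1 => /= ->; rewrite c1l.
Qed.

Lemma E3 A B C (f : Hom A B) (g : Hom B C) (h : Hom C (sh A)) :
  dist (Tri f g h) -> forall Z (y : Hom Z C), h \oc y = 0 -> exists x, y = g \oc x.
Proof. by move=> /rot; apply: E1. Qed.

Lemma E0 A B C (f : Hom A B) (g : Hom B C) (h : Hom C (sh A)) :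
  dist (Tri f g h) -> forall Z (y : Hom Z A), f \oc y = 0 ->
  exists w : Hom (sh Z) C, shm y = h \oc w.
Proof.
move=> /rot2 d Z y fy.
apply: (E1 d); by rewrite cNl -shM fy sh0 oppr0.
Qed.

Lemma E4 A B C (f : Hom A B) (g : Hom B C) (h : Hom C (sh A)) :
  dist (Tri f g h) -> forall Z (y : Hom A Z), shm y \oc h = 0 -> exists t, y = t \oc f.
Proof.
move=> /rot2 d Z y yh.
have [z ez] := E2 d yh.
have [t et] := sh_full z.
exists (- t); apply: sh_faith; by rewrite ez shM shN cNr cNl et.
Qed.

Lemma mono0 A B C (f : Hom A B) (g : Hom B C) (h : Hom C (sh A)) :
  dist (Tri f g h) -> forall Z (y : Hom Z A), f \oc y = 0 ->
  (forall w : Hom (sh Z) C, w = 0) -> y = 0.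
Proof.
move=> d Z y fy H; have [w ew] := E0 d fy.
by apply: sh_faith; rewrite ew (H w) c0r sh0.
Qed.

Lemma backrot A B C (f : Hom A B) (g : Hom B C) (h : Hom C (sh A)) :
  dist (Tri f g h) -> forall e : Hom C (sh (ush C)),
  eps C \oc e = idm C -> e \oc eps C = idm _ ->
  exists i : Hom (ush C) A, dist (Tri i f (e \oc g)).
Proof.
move=> d e e1 e2.
have [i ei] := sh_full (- (h \oc eps C)).
exists i; apply: rotb; move: d.
apply: (dist_iso (a := idm A) (b := idm B) (c := e)).
- by rewrite c1l c1r.
- by rewrite c1r.
- by rewrite sh1 c1l ei opprK -cA e1 c1r.
- exact: iso_id.
- exact: iso_id.
- exact: (iso_inv e2 e1).
Qed.

Lemma split_tri A B C (f : Hom A B) (g : Hom B C) (h : Hom C (sh A)) :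
  dist (Tri f g h) -> h = 0 ->
  exists (p : Hom B A) (s : Hom C B),
    [/\ p \oc f = idm A, g \oc s = idm C, f \oc p + s \oc g = idm B & p \oc s = 0].
Proof.
move=> d h0.
have mono : forall Z (u : Hom Z A), f \oc u = 0 -> u = 0.
  move=> Z u fu; have [w ew] := E0 d fu.
  by apply: sh_faith; rewrite ew h0 c0l sh0.
have [s es] : exists s, idm C = g \oc s by apply: (E3 d); rewrite h0 c0l.
have [p ep] : exists p, idm B - s \oc g = f \oc p.
  by apply: (E1 d); rewrite cBr c1r cA -es c1l subrr.
have gf := CZ d.
exists p, s; split.
- apply/eqP; rewrite -subr_eq0; apply/eqP; apply: mono.
  by rewrite cBr cA -ep cBl c1l c1r -cA gf c0r subr0 subrr.
- by rewrite es.
- by rewrite -ep subrK.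
- apply: mono; by rewrite cA -ep cBl c1l -cA -es c1r subrr.
Qed.

Lemma c4 A B C D E (a : Hom D E) (b : Hom C D) (c : Hom B C) (d : Hom A B) :
  (a \oc b) \oc (c \oc d) = a \oc ((b \oc c) \oc d).
Proof. by rewrite !cA. Qed.

Lemma split_iso A B C (f : Hom A B) (g : Hom B C) (p : Hom B A) (s : Hom C B) :
  p \oc f = idm A -> g \oc s = idm C -> f \oc p + s \oc g = idm B ->
  p \oc s = 0 -> g \oc f = 0 -> isomorphic B (bp A C).
Proof.
move=> pf gs fpsg ps gf.
have [e1 e2 e3 e4 e5] := bpE A C.
exists (bi1 \oc p + bi2 \oc g); exists (f \oc bp1 + s \oc bp2); split.
  by rewrite cDl !cDr !c4 e1 e2 e3 e4 !c0l !c0r !c1l addr0 add0r.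
by rewrite cDl !cDr !c4 pf gs ps gf !c0l !c0r !c1l addr0 add0r.
Qed.

Lemma ush_bp A B : isomorphic (ush (bp A B)) (bp (ush A) (ush B)).
Proof.
have [e1 e2 e3 e4 e5] := bpE A B.
apply: (@split_iso _ _ _ (ushm bi1) (ushm bp2) (ushm bp1) (ushm bi2)).
- by rewrite -ushM e1 ush1.
- by rewrite -ushM e2 ush1.
- by rewrite -!ushM -ushD e5 ush1.
- by rewrite -ushM e3 ush0.
- by rewrite -ushM e4 ush0.
Qed.
End Basics.

Section Main.
Variables (T : TriCat) (N U V : Obj T -> Prop).
Hypotheses (hN : triangulated_subcat N) (hU : additive_subcat U) (hV : additive_subcat V)
  (tU : torsion_pair U (rperp U)) (tV : torsion_pair (lperp V) V)
  (hXs : summand_closed (capP (capP U V) N))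
  (hD : subP (shift_down (rperp U)) (capP V N))
  (hC : subP (shift_up (lperp V)) (capP U N)).
Local Notation X := (capP (capP U V) N).
Implicit Types A B C Z Y : Obj T.

Lemma add_iso (P : Obj T -> Prop) A B : additive_subcat P -> isomorphic A B -> P A -> P B.
Proof. by case=> H _ _; apply: H. Qed.
Lemma add_split (P : Obj T -> Prop) A B C : additive_subcat P ->
  isomorphic B (bp A C) -> P A -> P C -> P B.
Proof.
move=> hP i PA PC; apply: (add_iso hP (isoS i)).
by case: hP => _ _ H; apply: H.
Qed.
Lemma add_cap (P Q : Obj T -> Prop) : additive_subcat P -> additive_subcat Q ->
  additive_subcat (capP P Q).
Proof.
move=> [i1 z1 b1] [i2 z2 b2]; split.
- by move=> A B i [PA QA]; split; [apply: (i1 A) | apply: (i2 A)].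
- by split.
- by move=> A B [? ?] [? ?]; split; [apply: b1 | apply: b2].
Qed.
Lemma hNa : additive_subcat N. Proof. by case: hN. Qed.
Lemma hXa : additive_subcat X.
Proof. by apply: add_cap; [apply: add_cap|apply: hNa]. Qed.

Lemma N_sh A : N A -> N (sh A). Proof. by case: hN => _ H _ _; apply: H. Qed.
Lemma N_ush A : N A -> N (ush A). Proof. by case: hN => _ _ H _; apply: H. Qed.
Lemma N_of_sh A : N (sh A) -> N A.
Proof. move=> /N_ush H; exact: (add_iso hNa (isoS (iso_eta A)) H). Qed.
Lemma N_of_ush A : N (ush A) -> N A.
Proof. move=> /N_sh H; exact: (add_iso hNa (iso_eps A) H). Qed.
Lemma NtriC A B C (f : Hom A B) (g : Hom B C) (h : Hom C (sh A)) :
  dist (Tri f g h) -> N A -> N B -> N C.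
Proof. by case: hN => _ _ _ H d; apply: (H _ d). Qed.
Lemma NtriA A B C (f : Hom A B) (g : Hom B C) (h : Hom C (sh A)) :
  dist (Tri f g h) -> N B -> N C -> N A.
Proof. by move=> /rot d NB NC; apply: N_of_sh; apply: (NtriC d). Qed.
Lemma NtriB A B C (f : Hom A B) (g : Hom B C) (h : Hom C (sh A)) :
  dist (Tri f g h) -> N A -> N C -> N B.
Proof. by move=> /rot2 d NA NC; apply: N_of_sh; apply: (NtriC d) => //; apply: N_sh. Qed.

Lemma Udec Y : exists Q D (f : Hom Q Y) (g : Hom Y D) (h : Hom D (sh Q)),
  [/\ dist (Tri f g h), U Q & rperp U D].
Proof. by case: tU => _ _ _ H; apply: H. Qed.
Lemma Vdec Y : exists C R (f : Hom C Y) (g : Hom Y R) (h : Hom R (sh C)),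
  [/\ dist (Tri f g h), lperp V C & V R].
Proof. by case: tV => _ _ _ H; apply: H. Qed.
Lemma D_VN D : rperp U D -> V (ush D) /\ N (ush D).
Proof. by move=> DD; apply: hD; exists D; split => //; apply: isoR. Qed.
Lemma C_UN C : lperp V C -> U (sh C) /\ N (sh C).
Proof. by move=> CC; apply: hC; exists C; split => //; apply: isoR. Qed.
Lemma D_N D : rperp U D -> N D.
Proof. by move=> /D_VN [_ /N_of_ush]. Qed.
Lemma C_N C : lperp V C -> N C.
Proof. by move=> /C_UN [_ /N_of_sh]. Qed.

Lemma ft_X Y : X Y -> forall A (f : Hom A Y), factors_through X f.
Proof. by move=> XY A f; exists Y; split => //; exists f, (idm Y); rewrite c1l. Qed.
Lemma ft_Xl Y : X Y -> forall B (f : Hom Y B), factors_through X f.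
Proof. by move=> XY B f; exists Y; split => //; exists (idm Y), f; rewrite c1r. Qed.
Lemma ft_cl A B C (f : Hom A B) (g : Hom B C) : factors_through X f -> factors_through X (g \oc f).
Proof. by case=> Y [XY [u [v ->]]]; exists Y; split => //; exists u, (g \oc v); rewrite cA. Qed.
Lemma ft_cr A B C (f : Hom B C) (g : Hom A B) : factors_through X f -> factors_through X (f \oc g).
Proof. by case=> Y [XY [u [v ->]]]; exists Y; split => //; exists (u \oc g), v; rewrite cA. Qed.
Lemma ft_add A B (f f' : Hom A B) : factors_through X f -> factors_through X f' ->
  factors_through X (f + f').
Proof.
case=> Y [XY [u [v ->]]] [Y' [XY' [u' [v' ->]]]].
exists (bp Y Y'); split; first by case: hXa => _ _ H; apply: H.
exists (bi1 \oc u + bi2 \oc u'), (v \oc bp1 + v' \oc bp2).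
have [e1 e2 e3 e4 e5] := bpE Y Y'.
by rewrite cDl !cDr !c4 e1 e2 e3 e4 !c0l !c0r !c1l addr0 add0r.
Qed.
Lemma ft_opp A B (f : Hom A B) : factors_through X f -> factors_through X (- f).
Proof. by case=> Y [XY [u [v ->]]]; exists Y; split => //; exists u, (- v); rewrite cNl. Qed.
Lemma ft_sub A B (f f' : Hom A B) : factors_through X f -> factors_through X f' ->
  factors_through X (f - f').
Proof. by move=> H1 H2; apply: ft_add => //; apply: ft_opp. Qed.

Lemma KL Y : V Y -> N Y -> forall Z, U Z -> forall y : Hom Z Y, factors_through X y.
Proof.
move=> VY NY Z UZ y.
have [Q [D [f [g [h [d UQ DD]]]]]] := Udec Y.
have [x ex] : exists x, y = f \oc x by apply: (E1 d); apply: DD.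
have [C [R [k [r [w [d2 CC VR]]]]]] := Vdec Q.
have [UsC NsC] := C_UN CC.
have k0 : k = 0.
  apply: (mono0 d); first by apply: CC.
  by move=> w'; apply: DD.
have [z ez] : exists z, f = z \oc r by apply: (E2 d2); rewrite k0 c0r.
have NQ : N Q := NtriA d NY (D_N DD).
have d3 := rot d2; rewrite k0 sh0 oppr0 in d3.
have [p [s [e1 e2 e3 e4]]] := split_tri d3 erefl.
have iR := split_iso e1 e2 e3 e4 (CZ d3).
exists R; split.
  split; [split|] => //.
    exact: (add_split hU iR UQ UsC).
  exact: (add_split hNa iR NQ NsC).
by exists (r \oc x), z; rewrite ex ez cA.
Qed.

Lemma KL' Y : U Y -> N Y -> forall Z, V Z -> forall y : Hom Y Z, factors_through X y.
Proof.
move=> UY NY Z VZ y.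
have [C [R [k [r [w [d CC VR]]]]]] := Vdec Y.
have [UsC NsC] := C_UN CC.
have [z ez] : exists z, y = z \oc r by apply: (E2 d); apply: CC.
have d1 := rot d.
have NR : N R := NtriB d1 NY NsC.
have [Q [D [q [g [h [d2 UQ DD]]]]]] := Udec R.
have g0 : g = 0.
  have [z2 ez2] : exists z2, g = z2 \oc w by apply: (E2 d1); apply: DD.
  by rewrite ez2 (DD _ UsC z2) c0l.
have [x ex] : exists x, r = q \oc x by apply: (E1 d2); rewrite g0 c0l.
have [VuD NuD] := D_VN DD.
have [e [ee1 ee2]] := eps_iso D.
have [i di] := backrot d2 ee2 ee1.
rewrite g0 c0r in di.
have [p [s [e1 e2 e3 e4]]] := split_tri di erefl.
have iQ := split_iso e1 e2 e3 e4 (CZ di).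
exists Q; split.
  split; [split|] => //.
    exact: (add_split hV iQ VuD VR).
  exact: (add_split hNa iQ NuD NR).
by exists x, (z \oc q); rewrite ez ex cA.
Qed.


Lemma trickV Y : U Y -> N Y -> forall Y0 (sg : Hom Y Y0) (pi : Hom Y0 Y),
  V Y0 -> pi \oc sg = idm Y -> X Y.
Proof.
move=> UY NY Y0 sg pi VY0 e.
have [C [R [k [r [w [d CC VR]]]]]] := Vdec Y.
have [UsC NsC] := C_UN CC.
have k0 : k = 0 by rewrite -(c1l k) -e -cA (CC _ VY0 (sg \oc k)) c0r.
have d3 := rot d; rewrite k0 sh0 oppr0 in d3.
have [p [s [e1 e2 e3 e4]]] := split_tri d3 erefl.
have iR := split_iso e1 e2 e3 e4 (CZ d3).
have XR : X (bp Y (sh C)).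
  split; [split|].
  - by case: hU => _ _ H; apply: H.
  - exact: (add_iso hV iR VR).
  - by case: hNa => _ _ H; apply: H.
by case: (hXs XR).
Qed.

Lemma trickU Y : V Y -> N Y -> forall Y0 (sg : Hom Y Y0) (pi : Hom Y0 Y),
  U Y0 -> pi \oc sg = idm Y -> X Y.
Proof.
move=> VY NY Y0 sg pi UY0 e.
have [Q [D [q [g [h [d UQ DD]]]]]] := Udec Y.
have g0 : g = 0 by rewrite -(c1r g) -e cA (DD _ UY0 (g \oc pi)) c0l.
have [VuD NuD] := D_VN DD.
have [eD [ee1 ee2]] := eps_iso D.
have [i di] := backrot d ee2 ee1.
rewrite g0 c0r in di.
have [p [s [e1 e2 e3 e4]]] := split_tri di erefl.
have iQ := split_iso e1 e2 e3 e4 (CZ di).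
have XQ : X (bp (ush D) Y).
  split; [split|].
  - exact: (add_iso hU iQ UQ).
  - by case: hV => _ _ H; apply: H.
  - by case: hNa => _ _ H; apply: H.
by case: (hXs XQ).
Qed.

Lemma retractX Q Y (s : Hom Q Y) (p : Hom Y Q) : X Y -> p \oc s = idm Q -> X Q.
Proof.
move=> XY e.
have [E [g [z d]]] := tri_ex s.
have z0 : z = 0.
  have := CZ (rot2 d); rewrite cNl => /eqP; rewrite oppr_eq0 => /eqP H.
  by rewrite -(c1l z) -sh1 -e shM -cA H c0r.
have [p' [s' [e1 e2 e3 e4]]] := split_tri d z0.
have iY := split_iso e1 e2 e3 e4 (CZ d).
by case: (hXs (add_iso hXa iY XY)).
Qed.

Lemma ft_idX Q : factors_through X (idm Q) -> X Q.
Proof. by case=> Y [XY [u [v e]]]; apply: (retractX (s := u) (p := v)). Qed.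

Lemma G1 W : (forall A, U A -> forall f : Hom A W, factors_through X f) -> N W.
Proof.
move=> HW.
have [Q [D [x [g [h [d UQ DD]]]]]] := Udec W.
have [X0 [XX0 [g0 [h0 ex]]]] := HW _ UQ x.
have UX0 : U X0 by case: XX0 => [[]].
have [k0 ek] : exists k0, h0 = x \oc k0 by apply: (E1 d); apply: DD.
have xu : x \oc (idm Q - k0 \oc g0) = 0 by rewrite cBr c1r cA -ek -ex subrr.
have [w ew] := E0 d xu.
have [e [ee1 ee2]] := eps_iso D.
have [rho erho] := sh_full (e \oc w).
have [VuD NuD] := D_VN DD.
have [X1 [XX1 [al [be eab]]]] := KL VuD NuD UQ rho.
have [phi ephi] := sh_full (h \oc eps D \oc shm be).
have eu : idm Q - k0 \oc g0 = phi \oc al.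
  apply: sh_faith; rewrite ew shM ephi -!cA -shM -eab erho.
  by rewrite (cA (eps D)) ee2 c1l.
have XQ : X Q.
  apply: ft_idX.
  have -> : idm Q = k0 \oc g0 + (idm Q - k0 \oc g0) by rewrite addrC subrK.
  apply: ft_add; first by apply: ft_cl; apply: ft_X.
  by rewrite eu; exists X1; split => //; exists al, phi.
apply: (NtriB d); first by case: XQ.
exact: D_N.
Qed.

Lemma G2 W : (forall A, V A -> forall f : Hom W A, factors_through X f) -> N W.
Proof.
move=> HW.
have [C [R [k [r [w [d CC VR]]]]]] := Vdec W.
have [UsC NsC] := C_UN CC.
have [X0 [XX0 [g0 [h0 ex]]]] := HW _ VR r.
have VX0 : V X0 by case: XX0 => [[]].
have [k0 ek] : exists k0, g0 = k0 \oc r by apply: (E2 d); apply: CC.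
have d1 := rot d.
have ur : (idm R - h0 \oc k0) \oc r = 0 by rewrite cBl c1l -cA -ek -ex subrr.
have [z ez] := E2 d1 ur.
have XR : X R.
  apply: ft_idX.
  have -> : idm R = h0 \oc k0 + (idm R - h0 \oc k0) by rewrite addrC subrK.
  apply: ft_add; first by apply: ft_cr; apply: ft_Xl.
  by rewrite ez; apply: ft_cr; apply: KL'.
by apply: (NtriA d1) => //; case: XR.
Qed.


Definition PU Y := forall Z, U Z -> forall y : Hom Z Y, factors_through X y.
Definition PV Y := forall Z, V Z -> forall y : Hom Y Z, factors_through X y.

Lemma PU_iso A B : isomorphic A B -> PU A -> PU B.
Proof.
case=> f [g [g1 g2]] HA Z UZ y.
have -> : y = f \oc (g \oc y) by rewrite cA g2 c1l.
by apply: ft_cl; apply: HA.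
Qed.
Lemma PV_iso A B : isomorphic A B -> PV A -> PV B.
Proof.
case=> f [g [g1 g2]] HA Z VZ y.
have -> : y = (y \oc f) \oc g by rewrite -cA g2 c1r.
by apply: ft_cr; apply: HA.
Qed.
Lemma PU_bp A B : PU A -> PU B -> PU (bp A B).
Proof.
move=> HA HB Z UZ y.
have [e1 e2 e3 e4 e5] := bpE A B.
have -> : y = bi1 \oc (bp1 \oc y) + bi2 \oc (bp2 \oc y) by rewrite !cA -cDl e5 c1l.
by apply: ft_add; apply: ft_cl; [apply: HA | apply: HB].
Qed.
Lemma PV_bp A B : PV A -> PV B -> PV (bp A B).
Proof.
move=> HA HB Z VZ y.
have [e1 e2 e3 e4 e5] := bpE A B.
have -> : y = (y \oc bi1) \oc bp1 + (y \oc bi2) \oc bp2 by rewrite -!cA -cDr e5 c1r.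
by apply: ft_add; apply: ft_cr; [apply: HA | apply: HB].
Qed.
Lemma PU_X Y : X Y -> PU Y. Proof. by move=> XY Z _ y; apply: ft_X. Qed.
Lemma PV_X Y : X Y -> PV Y. Proof. by move=> XY Z _ y; apply: ft_Xl. Qed.

Lemma TR4' A B C C' A' B' (f : Hom A B) (g : Hom B C)
    (f' : Hom B C') (f'' : Hom C' (sh A))
    (g' : Hom C A') (g'' : Hom A' (sh B))
    (h' : Hom C B') (h'' : Hom B' (sh A)) :
    dist (Tri f f' f'') -> dist (Tri g g' g'') -> dist (Tri (g \oc f) h' h'') ->
    exists (u : Hom C' B') (v : Hom B' A'), dist (Tri u v (shm f' \oc g'')).
Proof.
move=> d1 d2 d3; have [u [v [d _ _ _ _]]] := @tc_TR4 T _ _ _ _ _ _ f g f' f'' g' g'' h' h'' d1 d2 d3.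
by exists u, v.
Qed.

Lemma loc_a A : exists (W Q : Obj T) (a : Hom (ush A) W) (b : Hom W Q)
                (c : Hom Q (sh (ush A))),
           [/\ dist (Tri a b c), precover U (eps A \oc c), qrperp allP X U W &
               (V A -> capP U V Q /\ qrperp V X (capP U V) W)].
Proof.
have [eA [eA1 eA2]] := eps_iso A.
have [Q [D [f [g [h [d UQ DD]]]]]] := Udec A.
have [VuD NuD] := D_VN DD.
case: (classic (V A)) => VA; last first.
  have [eD [eD1 eD2]] := eps_iso D.
  have [i di] := backrot d eD2 eD1.
  have [i' di'] := backrot di eA2 eA1.
  exists (ush D), Q, i', i, (eA \oc f); split => //.
  - split => //; rewrite cA eA2 c1l => Z UZ y.
    have [x ->] : exists x, y = f \oc x by apply: (E1 d); apply: DD.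
    by exists x.
  - by split => //; apply: KL.
have [C [R [k [r [w [d2 CC VR]]]]]] := Vdec Q.
have [UsC NsC] := C_UN CC.
have k0 : k = 0.
  apply: (mono0 d); first by apply: CC.
  by move=> w'; apply: DD.
have d3 := rot d2; rewrite k0 sh0 oppr0 in d3.
have [p [s [e1 e2 e3 e4]]] := split_tri d3 erefl.
have iR := split_iso e1 e2 e3 e4 (CZ d3).
have XsC : X (sh C) := trickV UsC NsC VR e2.
have UR : U R := add_split hU iR UQ UsC.
have [Dt [gt [ht dt]]] := tri_ex (f \oc p).
have d' : dist (Tri ((f \oc p) \oc r) g h) by rewrite -cA e1 c1r.
have [u [v du]] := TR4' d3 dt d'.
rewrite (DD _ UsC u) in du.
have du2 := rot du; rewrite sh0 oppr0 in du2.
have [p2 [s2 [f1 f2 f3 f4]]] := split_tri du2 erefl.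
have iDt := split_iso f1 f2 f3 f4 (CZ du2).
have [eDt [eDt1 eDt2]] := eps_iso Dt.
have [i di] := backrot dt eDt2 eDt1.
have [i' di'] := backrot di eA2 eA1.
have iW : isomorphic (bp (ush D) (ush (sh (sh C)))) (ush Dt).
  exact: (isoS (isoT (iso_ush iDt) (ush_bp _ _))).
have XusC : X (ush (sh (sh C))) := add_iso hXa (iso_eta _) XsC.
have VW : V (ush Dt).
  apply: (add_iso hV iW); case: hV => _ _ H; apply: H => //.
  by case: XusC => [[]].
have PW : PU (ush Dt).
  by apply: (PU_iso iW); apply: PU_bp; [apply: KL | apply: PU_X].
exists (ush Dt), R, i', i, (eA \oc (f \oc p)); split => //.
- split => //; rewrite cA eA2 c1l => Z UZ y.
  have [x ->] : exists x, y = f \oc x by apply: (E1 d); apply: DD.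
  by exists (r \oc x); rewrite -cA (cA p) e1 c1l.
- by move=> _; split => //; split => // Z [UZ _]; apply: PW.
Qed.

Lemma loc_b A : exists (R W : Obj T) (j : Hom A R) (b : Hom R W) (c : Hom W (sh A)),
           [/\ dist (Tri j b c), preenvelope V j, qlperp allP X V W &
               (U A -> capP U V R /\ qlperp U X (capP U V) W)].
Proof.
have [C [R [k [r [w [d CC VR]]]]]] := Vdec A.
have [UsC NsC] := C_UN CC.
have d1 := rot d.
case: (classic (U A)) => UA; last first.
  exists R, (sh C), r, w, (- shm k); split => //.
  - split => // Z VZ y.
    have [z ->] : exists z, y = z \oc r by apply: (E2 d); apply: CC.
    by exists z.
  - by split => // Z VZ y; apply: KL'.
have [Q [D [q [g [h [d2 UQ DD]]]]]] := Udec R.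
have [VuD NuD] := D_VN DD.
have g0 : g = 0.
  have [z2 ez2] : exists z2, g = z2 \oc w by apply: (E2 d1); apply: DD.
  by rewrite ez2 (DD _ UsC z2) c0l.
have [j' ej'] : exists j', r = q \oc j' by apply: (E1 d2); rewrite g0 c0l.
have [eD [eD1 eD2]] := eps_iso D.
have [i di] := backrot d2 eD2 eD1.
rewrite g0 c0r in di.
have [p1 [s1 [e1 e2 e3 e4]]] := split_tri di erefl.
have iQ := split_iso e1 e2 e3 e4 (CZ di).
have XuD : X (ush D) := trickU VuD NuD UQ e1.
have VQ : V Q := add_split hV iQ VuD VR.
have [W [f' [f'' dj]]] := tri_ex j'.
have d' : dist (Tri (q \oc j') w (- shm k)) by rewrite -ej'.
have [u [v du]] := TR4' dj d2 d'.
rewrite (DD _ UsC v) in du.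
have [i2 di2] := backrot du eD2 eD1.
rewrite c0r in di2.
have [p2 [s2 [f1 f2 f3 f4]]] := split_tri di2 erefl.
have iW := split_iso f1 f2 f3 f4 (CZ di2).
have PW : PV W.
  by apply: (PV_iso (isoS iW)); apply: PV_bp; [apply: PV_X | move=> Z VZ y; apply: KL'].
exists Q, W, j', f', f''; split => //.
- split => // Z VZ y.
  have [z ->] : exists z, y = z \oc r by apply: (E2 d); apply: CC.
  by exists (z \oc q); rewrite -cA -ej'.
- move=> _; split => //; split.
    apply: (add_split hU iW) => //; by case: XuD => [[]].
  by move=> Z [_ VZ]; apply: PW.
Qed.


Lemma zid (G : zmodType) (a b c o : G) : a - o = b - o - (c - a) + (c - b).
Proof.
rewrite opprB -[RHS]addrA (addrA (a - c)) subrK.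
by rewrite [RHS]addrC addrA subrK.
Qed.

Lemma quot_of A B (s : Hom A B) (t1 t2 : Hom B A) :
  factors_through X (t1 \oc s - idm A) -> factors_through X (s \oc t2 - idm B) ->
  quot_iso X s.
Proof.
move=> H1 H2; exists t1; split => //.
rewrite (zid (s \oc t1) (s \oc t2) ((s \oc t1) \oc (s \oc t2)) (idm B)).
have -> : (s \oc t1) \oc (s \oc t2) - s \oc t1 = (s \oc t1) \oc (s \oc t2 - idm B).
  by rewrite cBr c1r.
have -> : (s \oc t1) \oc (s \oc t2) - s \oc t2 = s \oc ((t1 \oc s - idm A) \oc t2).
  by rewrite cBl c1l cBr !cA.
apply: ft_add; first by apply: ft_sub => //; apply: ft_cl.
by apply: ft_cl; apply: ft_cr.
Qed.

Lemma shB A B (f g : Hom A B) : shm (f - g) = shm f - shm g.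
Proof. by rewrite shD shN. Qed.

Lemma Zii : eqP' (shift_up (lperp V)) (capP U N) ->
  forall Q A (x : Hom Q (sh A)), U Q -> N Q -> V A -> x = 0.
Proof.
move=> H Q A x UQ NQ VA.
have [C0 [CC [phi [psi [psi1 psi2]]]]] := proj2 (H Q) (conj UQ NQ).
have [z ez] := sh_full (x \oc psi).
have z0 : z = 0 by apply: CC.
by rewrite -(c1r x) -psi1 cA -ez z0 sh0 c0l.
Qed.

Lemma Ziii : eqP' (shift_down (rperp U)) (capP V N) ->
  forall R Z (x : Hom Z (sh R)), V R -> N R -> U Z -> x = 0.
Proof.
move=> H R Z x VR NR UZ.
have [D' [DD i]] := proj2 (H R) (conj VR NR).
have [phi [psi [psi1 psi2]]] := isoT (iso_sh i) (iso_eps D').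
by rewrite -(c1l x) -psi1 -cA (DD _ UZ (phi \oc x)) c0r.
Qed.

Lemma verd_ii : eqP' (shift_up (lperp V)) (capP U N) -> verdier_cond N U X V.
Proof.
move=> H A B M s g h dT [UA VA] [UB VB] NM.
have [Q [D [q [d [e [dq UQ DD]]]]]] := Udec M.
have NQ : N Q := NtriA dq NM (D_N DD).
have hq : h \oc q = 0 := Zii H _ UQ NQ VA.
have dg : d \oc g = 0 := DD _ UB _.
have [rt ert] : exists rt, d = rt \oc h by apply: (E2 (rot dT)).
have [h1 eh1] : exists h1, h = h1 \oc d by apply: (E2 dq).
have [eD [eD1 eD2]] := eps_iso D.
have [rho erho] := sh_full (eD \oc rt).
have [VuD NuD] := D_VN DD.
have [X1 [XX1 [al [be eab]]]] := KL VuD NuD UA rho.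
have [phi ephi] := sh_full (h1 \oc eps D \oc shm be).
have e5 : shm (phi \oc al) = (h1 \oc eps D) \oc shm rho by rewrite eab !shM ephi -cA.
have he : shm (phi \oc al) \oc h = h.
  by rewrite e5 erho -!cA (cA (eps D)) eD2 c1l -ert -eh1.
have [t1 et1] : exists t1, idm A - phi \oc al = t1 \oc s.
  by apply: (E4 dT); rewrite shB sh1 cBl c1l he subrr.
have [ga ega] : exists ga, q = g \oc ga by apply: (E3 dT).
have [g1 eg1] : exists g1, g = q \oc g1 by apply: (E1 dq).
have fga := KL' UQ NQ VB ga.
have [t2 et2] : exists t2, idm B - ga \oc g1 = s \oc t2.
  by apply: (E1 dT); rewrite cBr c1r cA -ega -eg1 subrr.
apply: (quot_of (t1 := t1) (t2 := t2)).
  rewrite -et1 addrAC subrr add0r; apply: ft_opp.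
  by exists X1; split => //; exists al, phi.
by rewrite -et2 addrAC subrr add0r; apply: ft_opp; apply: ft_cr.
Qed.

Lemma verd_iii : eqP' (shift_down (rperp U)) (capP V N) -> verdier_cond N U X V.
Proof.
move=> H A B M s g h dT [UA VA] [UB VB] NM.
have [eM [eM1 eM2]] := eps_iso M.
have [i di] := backrot dT eM2 eM1.
have NM' : N (ush M) := N_ush NM.
have [C' [R' [k' [r' [w' [dV CC' VR']]]]]] := Vdec (ush M).
have [UsC NsC] := C_UN CC'.
have NR' : N R' := NtriB (rot dV) NM' NsC.
have [i' ei'] : exists i', i = i' \oc r' by apply: (E2 dV); apply: CC'.
have [rho erho] : exists rho, r' = rho \oc i.
  by apply: (E4 di); apply: (Ziii H).
have [X1 [XX1 [al [be eab]]]] := KL VR' NR' UA rho.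
have ii : i = ((i' \oc be) \oc al) \oc i by rewrite -!cA (cA be) -eab -erho -ei'.
have [t1 et1] : exists t1, idm A - (i' \oc be) \oc al = t1 \oc s.
  by apply: (E2 di); rewrite cBl c1l -ii subrr.
have [g1 eg1] : exists g1, eM \oc g = (- shm k') \oc g1.
  by apply: (E3 (rot2 dV)); rewrite cNl (Ziii H (shm r' \oc (eM \oc g)) VR' NR' UB) oppr0.
have [ga ega] : exists ga, - shm k' = (eM \oc g) \oc ga.
  by apply: (E3 (rot di)); rewrite cNl cNr opprK -shM (CC' _ VA (i \oc k')) sh0.
have fga := KL' UsC NsC VB ga.
have [t2 et2] : exists t2, idm B - ga \oc g1 = s \oc t2.
  by apply: (E1 (rot di)); rewrite cBr c1r cA -ega -eg1 subrr.
apply: (quot_of (t1 := t1) (t2 := t2)).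
  rewrite -et1 addrAC subrr add0r; apply: ft_opp.
  by exists X1; split => //; exists al, (i' \oc be).
by rewrite -et2 addrAC subrr add0r; apply: ft_opp; apply: ft_cr.
Qed.

Lemma main_sec :
  [/\ N_loc_triple N U X V,
      (eqP' (shift_up (lperp V)) (capP U N) -> verdier_cond N U X V) &
      (eqP' (shift_down (rperp U)) (capP V N) -> verdier_cond N U X V)].
Proof.
split; [|exact: verd_ii|exact: verd_iii].
split.
- split.
  + split; [by split | exact: hU | exact: hV | exact: hXa].
  + by move=> A [].
  + by split.
  + by move=> A _; apply: loc_a.
  + by move=> A _; apply: loc_b.
- by [].
- by move=> W [_ HW]; apply: G1.
- by move=> W [_ HW]; apply: G2.
Qed.

End Main.

Theorem lemma4p3 (T : TriCat) (N U V : Obj T -> Prop) :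
  triangulated_subcat N ->
  additive_subcat U -> additive_subcat V ->
  torsion_pair U (rperp U) -> torsion_pair (lperp V) V ->
  summand_closed (capP (capP U V) N) ->
  subP (shift_down (rperp U)) (capP V N) ->
  subP (shift_up (lperp V)) (capP U N) ->
  [/\ N_loc_triple N U (capP (capP U V) N) V,
      (eqP' (shift_up (lperp V)) (capP U N) ->
         verdier_cond N U (capP (capP U V) N) V) &
      (eqP' (shift_down (rperp U)) (capP V N) ->
         verdier_cond N U (capP (capP U V) N) V)].
Proof. by move=> *; apply: main_sec. Qed.
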